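(* Let $p\ge 2$, let $\mathcal{N}$ be a finite nonempty index set, let $\{\hat{\bm{\Sigma}}(t_i)\}_{i\in\mathcal{N}}$ be $p\times p$ symmetric positive semidefinite matrices, and let $\lambda>0$. For a tuple $\mathbb{\Omega}=\{\bm{\Omega}(t_i)\}_{i\in\mathcal{N}}$ of $p\times p$ symmetric positive definite matrices define $$L(\mathbb{\Omega})=\frac{1}{\sqrt{|\mathcal{N}|}}\sum_{i\in\mathcal{N}}\Big[\operatorname{tr}\big(\bm{\Omega}(t_i)\hat{\bm{\Sigma}}(t_i)\big)-\log\det\bm{\Omega}(t_i)\Big]+\lambda\sum_{u\neq v}\sqrt{\sum_{i\in\mathcal{N}}\Omega_{uv}(t_i)^2},$$ where $\Omega_{uv}(t_i)$ denotes the $(u,v)$ entry of $\bm{\Omega}(t_i)$. Suppose the minimizer $\{\hat{\bm{\Omega}}(t_i)\}_{i\in\mathcal{N}}$ of $L$ over tuples of positive definite matrices has, after a common permutation of the $p$ variables, the block-diagonal form $$\hat{\bm{\Omega}}(t_i)=\begin{pmatrix}\hat{\bm{\Omega}}_1(t_i)&\bm{0}\\ \bm{0}&\hat{\bm{\Omega}}_2(t_i)\end{pmatrix},\qquad i\in\mathcal{N},$$ where all $\hat{\bm{\Omega}}_1(t_i)$ have the same dimension, corresponding to a set $G_1$ of variables, and the $\hat{\bm{\Omega}}_2(t_i)$ correspond to the complementary set $G_2$. Then $\{\hat{\bm{\Omega}}_1(t_i)\}_{i\in\mathcal{N}}$ minimizes the objective of the same form as $L$ (same $\mathcal{N}$,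 same $\lambda$) in which each $\hat{\bm{\Sigma}}(t_i)$ is replaced by its principal submatrix on the variables in $G_1$, and likewise $\{\hat{\bm{\Omega}}_2(t_i)\}_{i\in\mathcal{N}}$ minimizes the analogous objective on the variables in $G_2$.
   Context: In the paper, $\mathcal{N}=\mathcal{N}_{k,d}=\{i:|t_i-t_k|\le d\}$ is the set of indices of observation times $0\le t_1\le\dots\le t_N\le 1$ within distance $d$ of $t_k$, and $\hat{\bm{\Sigma}}(t)=\sum_{j=1}^N \omega_h^{t_j}(t)\bm{x}_j\bm{x}_j^T$ is a kernel estimate of the covariance matrix, with weights $\omega_h^{t_j}(t)=K((t_j-t)/h)/\sum_{j'}K((t_{j'}-t)/h)$ for a symmetric nonnegative kernel $K$ and bandwidth $h>0$, based on observations $\bm{x}_j\in\mathbb{R}^p$. The objective $L$ is strictly convex, so its minimizer, when it exists, is unique. *)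

(* Defs.v *)
From HB Require Import structures.
From mathcomp Require Import all_boot all_order all_algebra.
From mathcomp Require Import all_classical all_reals.
From mathcomp Require Import exp.
Set Implicit Arguments. Unset Strict Implicit. Unset Printing Implicit Defensive.
Import Order.TTheory GRing.Theory Num.Theory.
Local Open Scope ring_scope.

Definition psd_mx (R : realType) (n : nat) (A : 'M[R]_n) : Prop :=
  A^T = A /\ forall v : 'rV[R]_n, 0 <= (v *m A *m v^T) 0 0.

Definition pd_mx (R : realType) (n : nat) (A : 'M[R]_n) : Prop :=
  A^T = A /\ forall v : 'rV[R]_n, v != 0 -> 0 < (v *m A *m v^T) 0 0.

(* The objective L: I is the finite index set N, S i = Sigma-hat(t_i),
   W i = Omega(t_i). *)
Definition objL (R : realType) (I : finType) (n : nat) (lam : R)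
    (S W : I -> 'M[R]_n) : R :=
  (Num.sqrt (#|I|%:R))^-1 *
    (\sum_(i : I) (\tr (W i *m S i) - ln (\det (W i))))
  + lam * \sum_(u : 'I_n) \sum_(v : 'I_n | u != v)
              Num.sqrt (\sum_(i : I) (W i u v) ^+ 2).

Definition is_minimizer (R : realType) (I : finType) (n : nat) (lam : R)
    (S Wh : I -> 'M[R]_n) : Prop :=
  (forall i, pd_mx (Wh i)) /\
  forall W : I -> 'M[R]_n, (forall i, pd_mx (W i)) ->
    objL lam S Wh <= objL lam S W.

Definition subm (R : realType) (p : nat) (G : {set 'I_p}) (A : 'M[R]_p)
    : 'M[R]_#|G| :=
  \matrix_(a < #|G|, b < #|G|) A (enum_val a) (enum_val b).

(* Main.v *)
Require Import Defs.
From HB Require Import structures.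
From mathcomp Require Import all_boot all_order all_algebra.
From mathcomp Require Import all_classical all_reals.
From mathcomp Require Import exp.
From mathcomp Require Import polyrcf fingroup perm.
Import Order.TTheory GRing.Theory Num.Theory.
Local Open Scope ring_scope.

Lemma char_poly_horner (R : comNzRingType) n (A : 'M[R]_n) x :
  (char_poly A).[x] = \det (x%:M - A).
Proof.
rewrite -horner_evalE -det_map_mx; congr (\det _).
rewrite /char_poly_mx; apply/matrixP=> i j.
by rewrite !mxE rmorphB rmorphMn/= horner_evalE hornerX horner_evalE hornerC.
Qed.

Lemma vvT_ge0 (R : realType) n (v : 'rV[R]_n) : 0 <= (v *m v^T) 0 0.
Proof.
rewrite mxE; apply: sumr_ge0 => j _; by rewrite mxE -expr2 sqr_ge0.
Qed.

Lemma pd_det_gt0 (R : realType) n (A : 'M[R]_n) : pd_mx A -> 0 < \det A.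
Proof.
move=> [_ hA].
have nz x : 0 <= x -> \det (x%:M + A) != 0.
  move=> x0; apply/negP => /det0P [v vn0 vM].
  have e : (v *m (x%:M + A) *m v^T) 0 0 = x * (v *m v^T) 0 0 + (v *m A *m v^T) 0 0.
    by rewrite mulmxDr mulmxDl mxE mul_mx_scalar -scalemxAl [in LHS]mxE.
  have := ltr_wpDl (mulr_ge0 x0 (@vvT_ge0 _ _ v)) (hA v vn0).
  by rewrite -e vM mul0mx mxE ltxx.
have qE x : (char_poly (- A)).[x] = \det (x%:M + A).
  by rewrite char_poly_horner opprK.
have lc : lead_coef (char_poly (- A)) = 1 by apply/eqP; exact: char_poly_monic.
have [N HN] := (@poly_pinfty_gt_lc _ (char_poly (- A))) (ltac:(by rewrite lc ltr01)).
rewrite ltNge; apply/negP => dA.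
have b0 : 0 <= Num.max N 0 by rewrite le_max lexx orbT.
have qb : 1 <= (char_poly (- A)).[Num.max N 0] by rewrite -lc; apply: HN; rewrite le_max lexx.
have h0 : (char_poly (- A)).[0] * (char_poly (- A)).[Num.max N 0] <= 0.
  have -> : (char_poly (- A)).[0] = \det A.
    by rewrite qE; congr (\det _); apply/matrixP=> i j; rewrite !mxE mul0rn add0r.
  apply: mulr_le0_ge0 => //; exact: le_trans qb.
have [x xin rx] := polyrcf.poly_ivt b0 h0.
move: (nz x (ltac:(by move: xin; rewrite in_itv /= => /andP[]))).
by move: rx; rewrite /root qE => ->.
Qed.

Definition rx (R : Type) m n (g : 'I_m -> 'I_n) (A : 'M[R]_n) : 'M[R]_m :=
  \matrix_(i, j) A (g i) (g j).
Arguments rx {R m n} g A.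

Lemma det_rx (R : comNzRingType) m n (g : 'I_m -> 'I_n) (A : 'M[R]_n) :
  injective g -> m = n -> \det (rx g A) = \det A.
Proof.
move=> ig e; subst m; pose s := perm ig.
have -> : rx g A = row_perm s (col_perm s A).
  by apply/matrixP => i j; rewrite !mxE !permE.
rewrite row_permE col_permE !det_mulmx mulrCA -det_mulmx -perm_mxM mulgV.
by rewrite perm_mx1 det1 mulr1.
Qed.

Lemma qfE (R : comNzRingType) n (v : 'rV[R]_n) (A : 'M[R]_n) :
  (v *m A *m v^T) 0 0 = \sum_i \sum_j v 0 i * A i j * v 0 j.
Proof.
rewrite mxE; under eq_bigr => j _ do rewrite mxE big_distrl /=.
rewrite exchange_big /=; apply: eq_bigr => i _; apply: eq_bigr => j _.
by rewrite !mxE.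
Qed.

Section RX.
Variables (R : realType) (m n : nat) (g : 'I_m -> 'I_n) (h : 'I_n -> 'I_m).
Hypotheses (gK : cancel g h) (hK : cancel h g).

Let gbij : bijective g. Proof. by exists h. Qed.
Let hbij : bijective h. Proof. by exists g. Qed.

Lemma sum_rx (F : 'I_n -> R) : \sum_i F i = \sum_j F (g j).
Proof. exact: (reindex g (onW_bij _ gbij)). Qed.

Lemma tr_rx (A : 'M[R]_n) : \tr (rx g A) = \tr A.
Proof. by rewrite /mxtrace (sum_rx (fun i => A i i)); apply: eq_bigr => i _; rewrite mxE. Qed.

Lemma rx_mul (A B : 'M[R]_n) : rx g (A *m B) = rx g A *m rx g B.
Proof.
apply/matrixP => i j; rewrite !mxE (sum_rx (fun k => A (g i) k * B k (g j))).
by apply: eq_bigr => k _; rewrite !mxE.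
Qed.

Lemma rx_trmx (A : 'M[R]_n) : rx g A^T = (rx g A)^T.
Proof. by apply/matrixP => i j; rewrite !mxE. Qed.

Lemma rxK (A : 'M[R]_n) : rx h (rx g A) = A.
Proof. by apply/matrixP => i j; rewrite !mxE !hK. Qed.

Lemma qf_rx (v : 'rV[R]_n) (A : 'M[R]_n) :
  ((\row_j v 0 (g j)) *m rx g A *m (\row_j v 0 (g j))^T) 0 0 = (v *m A *m v^T) 0 0.
Proof.
rewrite !qfE (sum_rx (fun i => \sum_j v 0 i * A i j * v 0 j)).
apply: eq_bigr => i _; rewrite (sum_rx (fun j => v 0 (g i) * A (g i) j * v 0 j)).
by apply: eq_bigr => j _; rewrite !mxE.
Qed.

Lemma pd_rx (A : 'M[R]_n) : pd_mx A -> pd_mx (rx g A).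
Proof.
move=> [sA hA]; split; first by rewrite -rx_trmx sA.
move=> w wn0; pose v := \row_i w 0 (h i).
have -> : w = \row_j v 0 (g j) by apply/rowP => j; rewrite !mxE gK.
rewrite qf_rx; apply: hA; apply/negP => /eqP v0; move/negP: wn0; apply.
apply/eqP/rowP => j; have := congr1 (fun M : 'rV[R]_n => M 0 (g j)) v0.
by rewrite !mxE gK.
Qed.

Lemma mn_eq : m = n.
Proof.
have := leq_card g (can_inj gK); have := leq_card h (can_inj hK); rewrite !card_ord => a b.
by apply/eqP; rewrite eqn_leq a b.
Qed.

Lemma objL_rx (I : finType) (lam : R) (S W : I -> 'M[R]_n) :
  objL lam (fun i => rx g (S i)) (fun i => rx g (W i)) = objL lam S W.
Proof.
rewrite /objL; congr (_ * _ + _ * _).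
  apply: eq_bigr => i _; rewrite -rx_mul tr_rx det_rx //; [exact: can_inj gK | exact: mn_eq].
rewrite (sum_rx (fun u => \sum_(v | u != v) Num.sqrt (\sum_i W i u v ^+ 2))).
apply: eq_bigr => u _.
rewrite (reindex g (onW_bij _ gbij)); apply: eq_big => [j|j _].
  by rewrite (inj_eq (can_inj gK)).
by congr Num.sqrt; apply: eq_bigr => i _; rewrite mxE.
Qed.

End RX.
Arguments pd_rx {R m n g h} gK hK [A] _.
Arguments objL_rx {R m n g h} gK hK I lam S W.
Arguments rxK {R m n g h} hK A.

Lemma qf_block (R : realType) n1 n2 (A1 : 'M[R]_n1) (A2 : 'M[R]_n2) (v1 : 'rV[R]_n1) (v2 : 'rV[R]_n2) :
  (row_mx v1 v2 *m block_mx A1 0 0 A2 *m (row_mx v1 v2)^T) 0 0 =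
  (v1 *m A1 *m v1^T) 0 0 + (v2 *m A2 *m v2^T) 0 0.
Proof.
by rewrite mul_row_block !mulmx0 addr0 add0r tr_row_mx mul_row_col mxE.
Qed.

Lemma qf_ge0 (R : realType) n (A : 'M[R]_n) (v : 'rV[R]_n) : pd_mx A -> 0 <= (v *m A *m v^T) 0 0.
Proof.
move=> [_ hA]; have [->|vn0] := eqVneq v 0; last exact: ltW (hA v vn0).
by rewrite !mul0mx mxE.
Qed.

Lemma pd_block (R : realType) n1 n2 (A1 : 'M[R]_n1) (A2 : 'M[R]_n2) :
  pd_mx (block_mx A1 0 0 A2) <-> pd_mx A1 /\ pd_mx A2.
Proof.
have z k (B : 'M[R]_k) : ((0 : 'rV[R]_k) *m B *m 0^T) 0 0 = 0.
  by rewrite !mul0mx mxE.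
split.
  move=> [sA hA].
  move: sA; rewrite tr_block_mx !trmx0 => /eq_block_mx [s1 _ _ s2].
  split; split => // v vn0.
    have := hA (row_mx v 0); rewrite qf_block z addr0; apply.
    by rewrite row_mx_eq0 negb_and vn0.
  have := hA (row_mx 0 v); rewrite qf_block z add0r; apply.
  by rewrite row_mx_eq0 negb_and vn0 orbT.
move=> [[s1 h1] [s2 h2]]; split; first by rewrite tr_block_mx !trmx0 s1 s2.
move=> v; rewrite -(hsubmxK v) qf_block row_mx_eq0 negb_and => /orP [vn0|vn0].
  by apply: ltr_pwDl; [exact: h1 | exact: qf_ge0].
by apply: ltr_wpDl; [exact: qf_ge0 | exact: h2].
Qed.

Lemma objL_block (R : realType) (I : finType) n1 n2 (lam : R)
    (S : I -> 'M[R]_(n1 + n2)) (W1 : I -> 'M[R]_n1) (W2 : I -> 'M[R]_n2) :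
  (forall i, pd_mx (W1 i)) -> (forall i, pd_mx (W2 i)) ->
  objL lam S (fun i => block_mx (W1 i) 0 0 (W2 i)) =
  objL lam (fun i => ulsubmx (S i)) W1 + objL lam (fun i => drsubmx (S i)) W2.
Proof.
move=> p1 p2; rewrite /objL.
have e1 : \sum_i (\tr (block_mx (W1 i) 0 0 (W2 i) *m S i)
                   - ln (\det (block_mx (W1 i) 0 0 (W2 i)))) =
   \sum_i (\tr (W1 i *m ulsubmx (S i)) - ln (\det (W1 i))) +
   \sum_i (\tr (W2 i *m drsubmx (S i)) - ln (\det (W2 i))).
  rewrite -big_split; apply: eq_bigr => i _ /=.
  rewrite -{1}(submxK (S i)) mulmx_block !mul0mx !addr0 !add0r mxtrace_block.
  rewrite det_ublock lnM ?posrE ?pd_det_gt0 //.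
  by rewrite opprD addrACA.
have e2 : \sum_(u < n1 + n2) \sum_(v < n1 + n2 | u != v)
     Num.sqrt (\sum_i block_mx (W1 i) 0 0 (W2 i) u v ^+ 2) =
   \sum_(u < n1) \sum_(v < n1 | u != v) Num.sqrt (\sum_i W1 i u v ^+ 2) +
   \sum_(u < n2) \sum_(v < n2 | u != v) Num.sqrt (\sum_i W2 i u v ^+ 2).
  rewrite big_split_ord /=; congr (_ + _); apply: eq_bigr => a _;
    rewrite big_split_ord /=.
    rewrite [X in _ + X]big1 ?addr0; last first.
      move=> b _; rewrite big1 ?sqrtr0 // => i _.
      by rewrite block_mxEur mxE expr2 mulr0.
    apply: eq_big => [b|b _]; first by rewrite (inj_eq (@lshift_inj _ _)).
    by congr Num.sqrt; apply: eq_bigr => i _; rewrite block_mxEul.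
  rewrite [X in X + _]big1 ?add0r; last first.
    move=> b _; rewrite big1 ?sqrtr0 // => i _.
    by rewrite block_mxEdl mxE expr2 mulr0.
  apply: eq_big => [b|b _]; first by rewrite (inj_eq (@rshift_inj _ _)).
  by congr Num.sqrt; apply: eq_bigr => i _; rewrite block_mxEdr.
by rewrite e1 e2 !mulrDr addrACA.
Qed.

Lemma min_rx (R : realType) m n (g : 'I_m -> 'I_n) (h : 'I_n -> 'I_m)
    (gK : cancel g h) (hK : cancel h g) (I : finType) (lam : R)
    (S Wh : I -> 'M[R]_n) :
  is_minimizer lam S Wh ->
  is_minimizer lam (fun i => rx g (S i)) (fun i => rx g (Wh i)).
Proof.
move=> [pW hW]; split => [i|V pV]; first exact: (pd_rx gK hK).
rewrite (objL_rx gK hK).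
have := hW (fun i => rx h (V i)) (fun i => pd_rx hK gK (pV i)).
rewrite -(objL_rx gK hK I lam S (fun i => rx h (V i))).
suff -> : (fun i => rx g (rx h (V i))) = V by [].
by apply: funext => i; rewrite (rxK gK).
Qed.

Lemma min_block (R : realType) (I : finType) n1 n2 (lam : R)
    (S : I -> 'M[R]_(n1 + n2)) (W1 : I -> 'M[R]_n1) (W2 : I -> 'M[R]_n2) :
  is_minimizer lam S (fun i => block_mx (W1 i) 0 0 (W2 i)) ->
  is_minimizer lam (fun i => ulsubmx (S i)) W1 /\
  is_minimizer lam (fun i => drsubmx (S i)) W2.
Proof.
move=> [pW hW].
have p1 i : pd_mx (W1 i) by case: ((pd_block _ _ _ _ _).1 (pW i)).
have p2 i : pd_mx (W2 i) by case: ((pd_block _ _ _ _ _).1 (pW i)).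
split; split => // V pV.
  have := hW (fun i => block_mx (V i) 0 0 (W2 i))
     (fun i => (pd_block _ _ _ _ _).2 (conj (pV i) (p2 i))).
  by rewrite !objL_block // lerD2r.
have := hW (fun i => block_mx (W1 i) 0 0 (V i))
   (fun i => (pd_block _ _ _ _ _).2 (conj (p1 i) (pV i))).
by rewrite !objL_block // lerD2l.
Qed.

Theorem theorem1 (R : realType) (p : nat) (I : finType)
    (S : I -> 'M[R]_p) (lam : R) (Wh : I -> 'M[R]_p) (G1 : {set 'I_p}) :
  (2 <= p)%N -> (0 < #|I|)%N ->
  (forall i, psd_mx (S i)) -> 0 < lam ->
  is_minimizer lam S Wh ->
  (forall i u v, u \in G1 -> v \notin G1 -> Wh i u v = 0) ->
  is_minimizer lam (fun i => subm G1 (S i)) (fun i => subm G1 (Wh i)) /\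
  is_minimizer lam (fun i => subm (~: G1) (S i)) (fun i => subm (~: G1) (Wh i)).
Proof.
move=> _ _ _ _ hmin hz.
have [pW _] := hmin.
pose g : 'I_(#|G1| + #|~: G1|) -> 'I_p := fun k =>
  match fintype.split k with inl a => enum_val a | inr b => enum_val b end.
have gL a : g (lshift #|~: G1| a) = enum_val a by rewrite /g (unsplitK (inl _ a)).
have gR b : g (rshift #|G1| b) = enum_val b by rewrite /g (unsplitK (inr _ b)).
have ginj : injective g.
  move=> i j; rewrite -[i]splitK -[j]splitK.
  case: (fintype.split i) => a; case: (fintype.split j) => b; rewrite /= ?gL ?gR => e.
  - by rewrite (enum_val_inj e).
  - by move: (enum_valP b); rewrite -e finset.in_setC (enum_valP a).
  - by move: (enum_valP a); rewrite e finset.in_setC (enum_valP b).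
  - by rewrite (enum_val_inj e).
have [h gK hK] : bijective g.
  by apply: (inj_card_bij ginj); rewrite !card_ord finset.cardsC card_ord.
have m1 := min_rx _ _ _ _ _ gK hK _ _ _ _ hmin.
have eW : (fun i => rx g (Wh i)) =
    (fun i => block_mx (subm G1 (Wh i)) 0 0 (subm (~: G1) (Wh i))).
  apply: funext => i; apply/matrixP => u v; rewrite mxE -[u]splitK -[v]splitK.
  case: (fintype.split u) => a; case: (fintype.split v) => b /=.
  - by rewrite block_mxEul gL gL mxE.
  - rewrite block_mxEur gL gR mxE; apply: hz; first exact: enum_valP.
    by have := enum_valP b; rewrite finset.in_setC.
  - rewrite block_mxEdl gL gR mxE.
    have := congr1 (fun M : 'M[R]_p => M (enum_val b) (enum_val a)) (proj1 (pW i)).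
    rewrite /= mxE => ->; apply: hz; first exact: enum_valP.
    by have := enum_valP a; rewrite finset.in_setC.
  - by rewrite block_mxEdr gR gR mxE.
rewrite eW in m1; have [mA mB] := min_block _ _ _ _ _ _ _ _ m1.
have eS1 : (fun i => ulsubmx (rx g (S i))) = (fun i => subm G1 (S i)).
  by apply: funext => i; apply/matrixP => a b; rewrite !mxE !gL.
have eS2 : (fun i => drsubmx (rx g (S i))) = (fun i => subm (~: G1) (S i)).
  by apply: funext => i; apply/matrixP => a b; rewrite !mxE !gR.
by rewrite -eS1 -eS2.
Qed.
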